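(* Let $G$ be a finite group with identity $\iota$ and let $(C_1,C_2,C_3,C_4)$ be a class vector of $G$. For $k\in\{1,2,3\}$ let $$\mathrm{Fix}_k=\{[\underline{\sigma}]\in\Sigma^i(C_1,C_2,C_3,C_4) \mid [\underline{\sigma}]^{\varphi_{4,k}}=[\underline{\sigma}]\}.$$ Then for every $k\in\{1,2,3\}$, every $\beta\in B_4$ and every $[\underline{\sigma}]\in\Sigma^i(C_1,C_2,C_3,C_4)$ we have $[\underline{\sigma}]\in \mathrm{Fix}_k$ if and only if $[\underline{\sigma}]^{\beta}\in\mathrm{Fix}_k$. In other words, the function $F_{B_4}(F_{4,k},\cdot)$ on $\Sigma^i(C_1,C_2,C_3,C_4)$, equal to $1$ on fixed points of $F_{4,k}=\langle\varphi_{4,k}\rangle$ and $-1$ otherwise, is invariant under the action of $B_4$.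
   Context: A class vector of length $m$ is a tuple $(C_1,\dots,C_m)$ of non-trivial conjugacy classes of $G$. $\Sigma(C_1,\dots,C_m)$ is the set of tuples $(\sigma_1,\dots,\sigma_m)$ with $\sigma_i\in C_i$, $\langle\sigma_1,\dots,\sigma_m\rangle=G$ and $\sigma_1\cdots\sigma_m=\iota$; $G$ acts on it by simultaneous conjugation and $\Sigma^i(C_1,\dots,C_m)$ is the set of orbits, the orbit of $(\sigma_1,\dots,\sigma_m)$ being written $[\sigma_1,\dots,\sigma_m]$. $\Sigma^i(C_1,\dots,C_m)^{sy}$ is the union of $\Sigma^i(C_{\pi(1)},\dots,C_{\pi(m)})$ over $\pi\in S_m$. The Hurwitz braid group $H_4$ is generated by $\beta_2,\beta_3,\beta_4$ with relations $\beta_2\beta_4=\beta_4\beta_2$, $\beta_2\beta_3\beta_2=\beta_3\beta_2\beta_3$, $\beta_3\beta_4\beta_3=\beta_4\beta_3\beta_4$, $\beta_2\beta_3\beta_4^2\beta_3\beta_2=1$; it acts from the right on $\Sigma^i(C_1,\dots,C_4)^{sy}$ by $[\underline{\sigma}]^{\beta_2}=[\sigma_1\sigma_2\sigma_1^{-1},\sigma_1,\sigma_3,\sigma_4]$, $[\underline{\sigma}]^{\beta_3}=[\sigma_1,\sigma_2\sigma_3\sigma_2^{-1},\sigma_2,\sigma_4]$, $[\underline{\sigma}]^{\beta_4}=[\sigma_1,\sigma_2,\sigma_3\sigma_4\sigma_3^{-1},\sigma_3]$. The pure braid group $B_4$ is generated by $\beta_{ij}=\beta_{i+1}^{-1}\cdots\beta_{j-1}^{-1}\beta_j^2\beta_{j-1}\cdots\beta_{i+1}$,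 $1\le i<j\le 4$; it maps $\Sigma^i(C_1,\dots,C_4)$ to itself. Put $\varphi_{4,1}=\beta_2\beta_4^{-1}$, $\varphi_{4,2}=(\beta_2\beta_3\beta_4)^2$, $\varphi_{4,3}=\varphi_{4,1}\varphi_{4,2}$; they act by $[\underline{\sigma}]^{\varphi_{4,1}}=[\sigma_2,\sigma_1,\sigma_1^{-1}\sigma_4\sigma_1,\sigma_1^{-1}\sigma_4^{-1}\sigma_3\sigma_4\sigma_1]$, $[\underline{\sigma}]^{\varphi_{4,2}}=[\sigma_3,\sigma_4,\sigma_1,\sigma_2]$, $[\underline{\sigma}]^{\varphi_{4,3}}=[\sigma_4,\sigma_4^{-1}\sigma_3\sigma_4,\sigma_1\sigma_2\sigma_1^{-1},\sigma_1]$. *)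

(* Defs.v *)
From mathcomp Require Import all_boot all_fingroup.
Set Implicit Arguments. Unset Strict Implicit. Unset Printing Implicit Defensive.
Local Open Scope group_scope.

Record tup4 (gT : finGroupType) := T4 { s1 : gT; s2 : gT; s3 : gT; s4 : gT }.
Arguments T4 {gT}.

Section Defs.
Variable gT : finGroupType.

Definition nontriv_class (C : {set gT}) : Prop :=
  C \in classes [set: gT] /\ 1 \notin C.

Definition inSigma (C1 C2 C3 C4 : {set gT}) (s : tup4 gT) : Prop :=
  [/\ s1 s \in C1, s2 s \in C2, s3 s \in C3 & s4 s \in C4] /\
  <<[set s1 s; s2 s; s3 s; s4 s]>> = [set: gT] /\
  s1 s * s2 s * s3 s * s4 s = 1.

(* simultaneous conjugation; x ^ g = g^-1 x g *)
Definition conj4 (s : tup4 gT) (g : gT) : tup4 gT :=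
  T4 (s1 s ^ g) (s2 s ^ g) (s3 s ^ g) (s4 s ^ g).

Definition same_orbit (s t : tup4 gT) : Prop := exists g : gT, t = conj4 s g.

(* Hurwitz generators beta_2, beta_3, beta_4; letter (b, true) = b^-1 *)
Inductive hgen := B2 | B3 | B4.
Definition letter := (hgen * bool)%type.
Definition hword := seq letter.

(* right actions of beta_i and beta_i^-1 on tuples; a b a^-1 = b ^ a^-1 *)
Definition act_letter (s : tup4 gT) (l : letter) : tup4 gT :=
  let: T4 a b c d := s in
  match l with
  | (B2, false) => T4 (b ^ a^-1) a c d
  | (B2, true)  => T4 b (a ^ b) c d
  | (B3, false) => T4 a (c ^ b^-1) b d
  | (B3, true)  => T4 a c (b ^ c) d
  | (B4, false) => T4 a b (d ^ c^-1) c
  | (B4, true)  => T4 a b d (c ^ d)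
  end.

Definition act_word (s : tup4 gT) (w : hword) : tup4 gT := foldl act_letter s w.

End Defs.

Definition inv_word (w : hword) : hword :=
  rev [seq (l.1, ~~ l.2) | l <- w].

Definition hgen_of_nat (m : nat) : hgen :=
  match m with 2 => B2 | 3 => B3 | _ => B4 end.

(* beta_ij = beta_{i+1}^-1 ... beta_{j-1}^-1 beta_j^2 beta_{j-1} ... beta_{i+1} *)
Definition beta_ij (i j : nat) : hword :=
  [seq (hgen_of_nat m, true) | m <- iota i.+1 (j - i.+1)]
  ++ [:: (hgen_of_nat j, false); (hgen_of_nat j, false)]
  ++ [seq (hgen_of_nat m, false) | m <- rev (iota i.+1 (j - i.+1))].

(* elements of the pure braid group B_4: words in beta_ij^{+-1};
   entry (i, j, e) with e = true meaning beta_ij^-1 *)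
Definition pword := seq (nat * nat * bool).

Definition valid_pword (w : pword) : bool :=
  all (fun x => let: (i, j, _) := x in (1 <= i < j) && (j <= 4)) w.

Definition hword_of_pword (w : pword) : hword :=
  flatten [seq let: (i, j, e) := x in
               if e then inv_word (beta_ij i j) else beta_ij i j | x <- w].

Definition phi41 : hword := [:: (B2, false); (B4, true)].
Definition phi42 : hword :=
  [:: (B2, false); (B3, false); (B4, false); (B2, false); (B3, false); (B4, false)].
Definition phi43 : hword := phi41 ++ phi42.

Definition phi4 (k : nat) : hword :=
  match k with 1 => phi41 | 2 => phi42 | _ => phi43 end.

Definition inFix (gT : finGroupType) (k : nat) (s : tup4 gT) : Prop :=
  same_orbit (act_word s (phi4 k)) s.

(* Main.v *)
Require Import Defs.
From mathcomp Require Import all_boot all_fingroup.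
Set Implicit Arguments. Unset Strict Implicit. Unset Printing Implicit Defensive.

Definition fw := seq (nat * bool).
Definition winv (w : fw) : fw := rev [seq (l.1, ~~ l.2) | l <- w].
Definition rcred (x : nat * bool) (w : fw) : fw :=
  match w with
  | y :: w' => if (y.1 == x.1) && (y.2 == ~~ x.2) then w' else x :: w
  | [::] => [:: x]
  end.
Definition fred (w : fw) : fw := foldr rcred [::] w.
Definition wconj (x y : fw) : fw := fred (winv y ++ x ++ y).
Definition W4 := (fw * fw * fw * fw)%type.
Definition actLW (W : W4) (l : letter) : W4 :=
  let: (a, b, c, d) := W in
  match l with
  | (B2, false) => (wconj b (winv a), a, c, d)
  | (B2, true)  => (b, wconj a b, c, d)
  | (B3, false) => (a, wconj c (winv b), b, d)
  | (B3, true)  => (a, c, wconj b c, d)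
  | (B4, false) => (a, b, wconj d (winv c), c)
  | (B4, true)  => (a, b, d, wconj c d)
  end.
Definition actWW (W : W4) (w : hword) : W4 := foldl actLW W w.
Definition conjW (W : W4) (g : fw) : W4 :=
  let: (a, b, c, d) := W in (wconj a g, wconj b g, wconj c g, wconj d g).

Definition hw (x : nat * nat * bool) : hword :=
  let: (i, j, e) := x in if e then inv_word (beta_ij i j) else beta_ij i j.

Definition W0 : W4 := ([:: (0,false)], [:: (1,false)], [:: (2,false)],
  [:: (2,true); (1,true); (0,true)]).

Definition gtab : seq ((nat*nat*nat*bool) * fw) := [::
  ((1,1,2,false), [::]);
  ((1,1,2,true), [::]);
  ((1,1,3,false), [::(0,false); (1,false); (2,false); (1,true)]);
  ((1,1,3,true), [::(1,false); (2,true); (1,true); (0,true)]);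
  ((1,1,4,false), [::(2,true); (1,true)]);
  ((1,1,4,true), [::(1,false); (2,false)]);
  ((1,2,3,false), [::(0,false); (1,false); (2,false); (0,true)]);
  ((1,2,3,true), [::(0,false); (2,true); (1,true); (0,true)]);
  ((1,2,4,false), [::(2,true); (0,true)]);
  ((1,2,4,true), [::(0,false); (2,false)]);
  ((1,3,4,false), [::]);
  ((1,3,4,true), [::]);
  ((2,1,2,false), [::(0,false); (1,false)]);
  ((2,1,2,true), [::(1,true); (0,true)]);
  ((2,1,3,false), [::(0,false); (1,false); (2,false); (1,true); (0,false); (1,false); (2,true); (1,true); (0,true); (0,true)]);
  ((2,1,3,true), [::(1,false); (2,true); (1,true); (0,false); (1,false); (2,false); (1,true); (0,true)]);
  ((2,1,4,false), [::(2,true); (1,true); (0,false); (1,false); (2,false); (1,false); (2,true); (1,true); (1,true); (0,true)]);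
  ((2,1,4,true), [::(1,false); (2,false); (0,false); (2,true); (1,false); (2,false); (1,true); (0,true)]);
  ((2,2,3,false), [::(0,false); (1,false); (2,false); (0,true)]);
  ((2,2,3,true), [::(0,false); (2,true); (1,true); (0,true)]);
  ((2,2,4,false), [::(2,true); (1,false); (2,false); (0,false); (1,true); (0,true)]);
  ((2,2,4,true), [::(0,false); (2,false); (0,false); (1,false); (0,true); (2,true); (1,true); (0,true)]);
  ((2,3,4,false), [::(1,true); (0,true)]);
  ((2,3,4,true), [::(0,false); (1,false)]);
  ((3,1,2,false), [::(0,false); (1,false)]);
  ((3,1,2,true), [::(1,true); (0,true)]);
  ((3,1,3,false), [::(0,false); (1,false); (2,false); (1,true); (0,false); (1,false); (2,true); (1,true); (0,true); (1,false); (0,false); (1,false); (2,false); (1,true); (1,true); (0,true)]);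
  ((3,1,3,true), [::(1,false); (2,true); (1,true); (0,false); (1,false); (2,false); (1,false); (2,true); (1,true); (0,true); (1,true); (0,true)]);
  ((3,1,4,false), [::(2,true); (1,true); (0,false); (1,false); (2,false); (1,false); (2,true); (1,true); (0,false); (1,false); (2,false); (0,true); (1,true); (0,true)]);
  ((3,1,4,true), [::(1,false); (2,false); (0,false); (2,true); (1,false); (2,false); (0,false); (2,true); (1,true); (0,true); (1,true); (0,true)]);
  ((3,2,3,false), [::(0,false); (1,false); (2,false); (1,false); (2,true); (1,true); (1,true); (0,true)]);
  ((3,2,3,true), [::(0,false); (2,true); (1,false); (2,false); (1,true); (0,true)]);
  ((3,2,4,false), [::(2,true); (1,false); (2,false); (0,false); (2,true); (0,true); (1,true); (0,true)]);
  ((3,2,4,true), [::(0,false); (2,false); (0,false); (1,false); (0,true); (2,true); (0,false); (2,false); (1,true); (0,true)]);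
  ((3,3,4,false), [::(1,true); (0,true)]);
  ((3,3,4,true), [::(0,false); (1,false)])].

Definition gof (x : nat*nat*nat*bool) : fw :=
  odflt [::] (ohead [seq p.2 | p <- gtab & p.1 == x]).

Definition phiw (k : nat) : hword := phi4 k.

Definition check : bool :=
  all (fun p => let: (k, i, j, e) := p.1 in
        actWW W0 (phi4 k ++ hw (i, j, e)) == conjW (actWW W0 (hw (i, j, e) ++ phi4 k)) (gof p.1)) gtab.

Lemma check_ok : check.
Proof. vm_compute. reflexivity. Qed.

Section Sem.
Variable gT : finGroupType.
Local Open Scope group_scope.
Variable e : seq gT.
Definition atom (l : nat * bool) : gT := if l.2 then (nth 1 e l.1)^-1 else nth 1 e l.1.
Definition ev (w : fw) : gT := foldr (fun l acc => atom l * acc) 1 w.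

Lemma ev_cat u v : ev (u ++ v) = ev u * ev v.
Proof. by elim: u => [|x u IH] /=; rewrite ?mul1g // IH mulgA. Qed.

Lemma ev_winv w : ev (winv w) = (ev w)^-1.
Proof.
elim: w => [|x w IH] /=; first by rewrite invg1.
rewrite /winv map_cons rev_cons -cats1 ev_cat -/(winv w) IH invgM /= mulg1.
by congr (_ * _); rewrite /atom /=; case: x.2; rewrite ?invgK.
Qed.

Lemma ev_rcred x w : ev (rcred x w) = atom x * ev w.
Proof.
case: w => [|y w] //=.
case: ifP => // /andP [/eqP E1 /eqP E2].
rewrite mulgA /atom E1 E2; case: x.2 => /=; by rewrite ?mulgV ?mulVg mul1g.
Qed.

Lemma ev_fred w : ev (fred w) = ev w.
Proof. by elim: w => [|x w IH] //=; rewrite ev_rcred IH. Qed.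

Lemma ev_wconj x y : ev (wconj x y) = ev x ^ ev y.
Proof. by rewrite /wconj ev_fred !ev_cat ev_winv conjgE. Qed.

Definition ev4 (W : W4) : tup4 gT :=
  let: (a, b, c, d) := W in T4 (ev a) (ev b) (ev c) (ev d).

Lemma ev_actLW W l : ev4 (actLW W l) = act_letter (ev4 W) l.
Proof.
case: W => [[[a b] c] d]; case: l => [[] []] /=; by rewrite ev_wconj ?ev_winv.
Qed.

Lemma ev_actWW W w : ev4 (actWW W w) = act_word (ev4 W) w.
Proof.
elim: w W => [|l w IH] W //=.
by rewrite /actWW /= -/(actWW _ w) IH ev_actLW.
Qed.

Lemma ev_conjW W g : ev4 (conjW W g) = conj4 (ev4 W) (ev g).
Proof. by case: W => [[[a b] c] d] /=; rewrite !ev_wconj. Qed.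
End Sem.

Section Main.
Variable gT : finGroupType.
Local Open Scope group_scope.

Definition prod4 (t : tup4 gT) := s1 t * s2 t * s3 t * s4 t.

Ltac gnorm := rewrite ?conjgE ?invgM ?invgK ?invg1 ?mulgA;
  repeat progress rewrite ?mulgK ?mulgVK ?mulVg ?mulgV ?mul1g ?mulg1 ?mulgA.

Lemma prod_act_letter (t : tup4 gT) l : prod4 (act_letter t l) = prod4 t.
Proof. case: t => a b c d; case: l => [[] []]; rewrite /prod4 /=; gnorm; done. Qed.

Lemma act_cons (t : tup4 gT) l w : act_word t (l :: w) = act_word (act_letter t l) w.
Proof. by []. Qed.

Lemma prod_act (t : tup4 gT) w : prod4 (act_word t w) = prod4 t.
Proof. elim: w t => [|l w IH] t //; by rewrite act_cons IH prod_act_letter. Qed.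

Lemma conj4_act_letter (t : tup4 gT) (g : gT) l : act_letter (conj4 t g) l = conj4 (act_letter t l) g.
Proof.
case: t => a b c d; case: l => [[] []]; rewrite /conj4 /=; congr T4;
  rewrite -?conjVg; first [done | by rewrite [RHS]conjJg].
Qed.

Lemma conj4_act (t : tup4 gT) (g : gT) w : act_word (conj4 t g) w = conj4 (act_word t w) g.
Proof. elim: w t => [|l w IH] t //; by rewrite !act_cons conj4_act_letter IH. Qed.

Lemma act_cat (t : tup4 gT) u v : act_word t (u ++ v) = act_word (act_word t u) v.
Proof. exact: foldl_cat. Qed.

Lemma act_letter_inv (t : tup4 gT) l : act_letter (act_letter t l) (l.1, ~~ l.2) = t.
Proof.
case: t => a b c d; case: l => [[] []] /=; congr T4;
  by rewrite ?conjgK ?conjgKV ?invgK -?conjgM ?mulVg ?mulgV ?conjg1 ?conjgKV.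
Qed.

Lemma act_inv (t : tup4 gT) w : act_word (act_word t w) (inv_word w) = t.
Proof.
elim: w t => [|l w IH] t //.
rewrite /inv_word map_cons rev_cons -cats1 act_cat -/(inv_word w) act_cons IH /=.
exact: act_letter_inv.
Qed.

Lemma so_refl (t : tup4 gT) : same_orbit t t.
Proof. exists 1; by case: t => a b c d; rewrite /conj4 /= !conjg1. Qed.

Lemma so_sym (t : tup4 gT) u : same_orbit t u -> same_orbit u t.
Proof. case=> g ->; exists g^-1; by case: t => a b c d; rewrite /conj4 /= !conjgK. Qed.

Lemma so_trans (t : tup4 gT) u v : same_orbit t u -> same_orbit u v -> same_orbit t v.
Proof.
case=> g -> [h ->]; exists (g * h); by case: t => a b c d; rewrite /conj4 /= !conjgM.
Qed.

Lemma so_act (t : tup4 gT) u w : same_orbit t u -> same_orbit (act_word t w) (act_word u w).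
Proof. case=> g ->; exists g; by rewrite conj4_act. Qed.

Lemma key_mem k x : 1 <= k <= 3 -> (let: (i, j, _) := x in (1 <= i < j) && (j <= 4)) ->
  (k, x.1.1, x.1.2, x.2) \in [seq p.1 | p <- gtab].
Proof.
case: x => [[i j] e] /=.
case: k => [|[|[|[|k]]]] //= _; case: i => [|[|[|[|[|i]]]]] //=;
  case: j => [|[|[|[|[|j]]]]] //=; rewrite ?andbF // => _; case: e; vm_compute; reflexivity.
Qed.

Lemma comm (t : tup4 gT) k x : prod4 t = 1 -> 1 <= k <= 3 ->
  (let: (i, j, _) := x in (1 <= i < j) && (j <= 4)) ->
  same_orbit (act_word t (hw x ++ phi4 k)) (act_word t (phi4 k ++ hw x)).
Proof.
move=> Hp hk; case: x => [[i j] e] hx.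
have /mapP [p Hp1 Ep] := @key_mem k (i, j, e) hk hx.
have := allP check_ok p Hp1.
rewrite /= -Ep /= => /eqP Hc.
case: t Hp => a b c d; rewrite /prod4 /= => Hp.
have Ed : d = (a * b * c)^-1.
  by rewrite -[d]mul1g -(mulVg (a * b * c)) -mulgA Hp mulg1.
have E : T4 a b c d = ev4 [:: a; b; c] W0.
  by rewrite /= Ed !mulg1 !invgM mulgA.
rewrite E -!ev_actWW Hc ev_conjW; exists (ev [:: a; b; c] (gof (k, i, j, e))).
done.
Qed.

End Main.

Lemma hwp_cons x b : hword_of_pword (x :: b) = hw x ++ hword_of_pword b.
Proof. by case: x => [[i j] e]. Qed.

Lemma step (gT : finGroupType) (t : tup4 gT) k x : prod4 t = 1%g -> 1 <= k <= 3 ->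
  (let: (i, j, _) := x in (1 <= i < j) && (j <= 4)) ->
  inFix k t <-> inFix k (act_word t (hw x)).
Proof.
move=> Hp hk hx; have C := comm Hp hk hx; rewrite /inFix; split => H.
- rewrite -act_cat; apply: so_trans C _; rewrite act_cat; exact: so_act.
- have H1 : same_orbit (act_word (act_word t (phi4 k)) (hw x)) (act_word t (hw x)).
    rewrite -act_cat; apply: so_trans (so_sym C) _; by rewrite act_cat.
  have := so_act (inv_word (hw x)) H1; by rewrite !act_inv.
Qed.

Theorem theorem1 (gT : finGroupType) (C1 C2 C3 C4 : {set gT})
  (hC1 : nontriv_class C1) (hC2 : nontriv_class C2)
  (hC3 : nontriv_class C3) (hC4 : nontriv_class C4)
  (k : nat) (hk : 1 <= k <= 3) (beta : pword) (hbeta : valid_pword beta)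
  (s : tup4 gT) (hs : inSigma C1 C2 C3 C4 s) :
  inFix k s <-> inFix k (act_word s (hword_of_pword beta)).
Proof.
have Hp : prod4 s = 1%g by case: hs => _ [].
clear hs hC1 hC2 hC3 hC4.
elim: beta hbeta s Hp => [|x b IH] /= hb s Hp; first by [].
case/andP: hb => hx hb.
rewrite hwp_cons act_cat.
apply: iff_trans (step Hp hk hx) _.
apply: IH => //; by rewrite prod_act.
Qed.
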